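(* Let $E$ be a countable subset of $2^{\mathfrak c}$, let $\emptyset\neq I\subseteq E$, and let $F\subseteq E$ be finite. For each $\xi\in I$ let $k_\xi\in\omega$, let $\{p_\xi:\xi\in I\}$ be a family of pairwise Rudin–Keisler incomparable selective ultrafilters, let $g_\xi:\omega\to([E]^{<\omega})^{k_\xi}$ be a function such that the family $\{g^j_\xi(m):j<k_\xi,\ m\in\omega\}$ is linearly independent, and let $d_\xi\in([E]^{<\omega})^{k_\xi}$. Let also $\{y_n:n\in\omega\}\subseteq E$ be a faithfully indexed (injective) sequence. Then there exist a strictly increasing sequence $\{b_i:i\in\omega\}\subseteq\omega$, a surjective function $r:\omega\to I$ and a sequence $\{E_i:i\in\omega\}$ of finite subsets of $E$ such that: (a) $F\subseteq E_0$; (b) $E=\bigcup_{i\in\omega}E_i$; (c) $r(m)\in E_m$ for each $m\in\omega$; (d) $\bigcup\{d^j_{r(m)}:j<k_{r(m)}\}\subseteq E_m$ for each $m\in\omega$; (e) $E_{m+1}\supseteq \bigcup\{g^j_\xi(b_m):\xi\in E_m\cap I,\ j<k_\xi\}\cup E_m$ for each $m\in\omega$; (f) $\{g^j_{r(m)}(b_m):j<k_{r(m)}\}\cup\{\{\mu\}:\mu\in E_m\}$ is linearly independent for each $m\in\omega$; (g) $\{b_i:i\in r^{-1}(\xi)\}\in p_\xi$ for every $\xi\in I$; (h) there is a strictly increasing sequence $(N_i)_{i\in\omega}$ of natural numbers such that $\{n\in\omega:y_n\in E_i\}=\{0,1,\dots,2N_i-1\}$ for each $i\in\omega$.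
   Context: $\mathfrak c$ is the cardinality of the continuum and $2^{\mathfrak c}$ is regarded as a set of ordinals. $[E]^{<\omega}$ is the set of finite subsets of $E$, a vector space over the field $2=\{0,1\}$ under symmetric difference; linear independence refers to this structure (for indexed families, so members are distinct). For a tuple $g\in([E]^{<\omega})^k$, $g^j$ denotes its $j$-th coordinate. Selective ultrafilter: a free ultrafilter $p$ on $\omega$ such that for every partition $\{A_n\}$ of $\omega$ either some $A_n\in p$ or some $B\in p$ meets each $A_n$ in exactly one point. Rudin–Keisler order: $p\le_{RK}q$ iff $p=\{A: f^{-1}(A)\in q\}$ for some $f:\omega\to\omega$; incomparable means neither $p\le_{RK}q$ nor $q\le_{RK}p$. *)

(* Defs.v *)
From HB Require Import structures.
From mathcomp Require Import all_boot.
From mathcomp Require Import finmap.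
Set Implicit Arguments. Unset Strict Implicit. Unset Printing Implicit Defensive.
Local Open Scope fset_scope.

Definition countable_set (T : Type) (E : T -> Prop) : Prop :=
  exists f : nat -> T, forall x, E x -> exists n, f n = x.

(* Symmetric difference: the addition of the F_2-vector space [E]^{<omega}. *)
Definition symdiff (T : choiceType) (A B : {fset T}) : {fset T} :=
  (A `\` B) `|` (B `\` A).

Definition fsum (J T : choiceType) (S : {fset J}) (v : J -> {fset T}) : {fset T} :=
  \big[@symdiff T/fset0]_(i <- S) v i.

Definition lin_indep (J T : choiceType) (D : J -> Prop) (v : J -> {fset T}) : Prop :=
  forall S : {fset J}, (forall j, j \in S -> D j) -> S != fset0 ->
    fsum S v != fset0.

Definition ultrafilter (p : (nat -> Prop) -> Prop) : Prop :=
  [/\ ~ p (fun _ => False),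
      (forall A B : nat -> Prop, p A -> (forall n, A n -> B n) -> p B),
      (forall A B : nat -> Prop, p A -> p B -> p (fun n => A n /\ B n)) &
      (forall A : nat -> Prop, p A \/ p (fun n => ~ A n))].

Definition free_ultrafilter (p : (nat -> Prop) -> Prop) : Prop :=
  ultrafilter p /\ forall A : nat -> Prop, p A -> forall m, exists n, m <= n /\ A n.

Definition is_partition (A : nat -> nat -> Prop) : Prop :=
  [/\ (forall n, exists x, A n x),
      (forall n m x, n <> m -> A n x -> A m x -> False) &
      (forall x, exists n, A n x)].

Definition selective (p : (nat -> Prop) -> Prop) : Prop :=
  free_ultrafilter p /\
  forall A : nat -> nat -> Prop, is_partition A ->
    (exists n, p (A n)) \/
    (exists B : nat -> Prop, p B /\
       forall n, exists x, (B x /\ A n x) /\ forall z, B z -> A n z -> z = x).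

Definition RK_le (p q : (nat -> Prop) -> Prop) : Prop :=
  exists f : nat -> nat, forall A : nat -> Prop, p A <-> q (fun n => A (f n)).

Definition RK_incomparable (p q : (nat -> Prop) -> Prop) : Prop :=
  ~ RK_le p q /\ ~ RK_le q p.

(* Main.v *)
Require Import Defs.
From HB Require Import structures.
From mathcomp Require Import all_boot.
From mathcomp Require Import finmap.
From mathcomp Require Import zify.
From Stdlib Require Import ClassicalEpsilon.
Set Implicit Arguments. Unset Strict Implicit. Unset Printing Implicit Defensive.
Local Open Scope fset_scope.

Definition dec (P : Prop) : bool :=
  if excluded_middle_informative P then true else false.

Lemma decP (P : Prop) : reflect P (dec P).
Proof. rewrite /dec; case: excluded_middle_informative => H; by constructor. Qed.

Definition chooseD (A : Type) (a0 : A) (P : A -> Prop) : A :=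
  match excluded_middle_informative (exists x, P x) with
  | left H => proj1_sig (constructive_indefinite_description _ H)
  | right _ => a0 end.

Lemma chooseDP (A : Type) (a0 : A) (P : A -> Prop) : (exists x, P x) -> P (chooseD a0 P).
Proof.
rewrite /chooseD; case: excluded_middle_informative => // H _.
exact: proj2_sig (constructive_indefinite_description _ H).
Qed.

Lemma exists_least (P : nat -> Prop) : (exists n, P n) -> exists n, P n /\ forall m, P m -> n <= m.
Proof.
move=> H.
have H' : exists n, dec (P n) by case: H => n Hn; exists n; apply/decP.
case: (ex_minnP H') => n /decP Pn Hmin; exists n; split => // m Pm.
by apply: Hmin; apply/decP.
Qed.

Definition least (P : nat -> Prop) : nat := chooseD 0 (fun n => P n /\ forall m, P m -> n <= m).

Lemma leastP (P : nat -> Prop) : (exists n, P n) -> P (least P) /\ forall m, P m -> least P <= m.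
Proof. by move=> /exists_least H; apply: (chooseDP 0 H). Qed.

Fixpoint mx (f : nat -> nat) (n : nat) : nat :=
  if n is n'.+1 then maxn (mx f n') (f n') else 0.

Lemma mx_ge f n i : i < n -> f i <= mx f n.
Proof.
elim: n => // n IH; rewrite ltnS leq_eqVlt => /orP [/eqP -> | Hi] /=.
  by rewrite leq_max leqnn orbT.
by rewrite leq_max IH.
Qed.

Lemma mx_le f n c : (forall i, i < n -> f i <= c) -> mx f n <= c.
Proof.
elim: n => //= n IH H; rewrite geq_max IH ?H //.
by move=> i Hi; apply: H; apply: ltnW.
Qed.

Lemma mx_mono_n f n m : n <= m -> mx f n <= mx f m.
Proof. by move=> H; apply: mx_le => i Hi; apply: mx_ge; apply: leq_trans H. Qed.

Lemma mx_mono_f f g n : (forall i, i < n -> f i <= g i) -> mx f n <= mx g n.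
Proof. by move=> H; apply: mx_le => i Hi; apply: leq_trans (H i Hi) (mx_ge _ Hi). Qed.

Definition smax (T : Type) (f : T -> nat) (s : seq T) : nat :=
  foldr (fun x m => maxn (f x) m) 0 s.

Lemma smax_ge (T : eqType) (f : T -> nat) s x : x \in s -> f x <= smax f s.
Proof.
elim: s => //= a s IH; rewrite in_cons => /orP [/eqP -> | H].
  by rewrite leq_max leqnn.
by rewrite leq_max IH ?orbT.
Qed.

Section Ultra.
Variable p : (nat -> Prop) -> Prop.
Hypothesis Hp : free_ultrafilter p.

Lemma uf_up A B : p A -> (forall n, A n -> B n) -> p B.
Proof. by case: Hp => [[_ H _ _] _]; apply: H. Qed.

Lemma uf_cap A B : p A -> p B -> p (fun n => A n /\ B n).
Proof. by case: Hp => [[_ _ H _] _]; apply: H. Qed.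

Lemma uf_nonempty A : p A -> exists n, A n.
Proof.
case: Hp => [[H0 _ _ _] _] HA; apply: NNPP => H; apply: H0.
exact: (uf_up HA (fun n An => H (ex_intro _ n An))).
Qed.

Lemma uf_compl A : ~ p A -> p (fun n => ~ A n).
Proof. by case: Hp => [[_ _ _ H] _] HA; case: (H A). Qed.

Lemma uf_notboth A : p A -> p (fun n => ~ A n) -> False.
Proof. move=> H1 H2; case: (uf_nonempty (uf_cap H1 H2)) => n []; tauto. Qed.

Lemma uf_union A B : p (fun n => A n \/ B n) -> p A \/ p B.
Proof.
move=> H; apply: NNPP => HH.
have HA : ~ p A by tauto.
have HB : ~ p B by tauto.
apply: (uf_notboth H); apply: uf_up (uf_cap (uf_compl HA) (uf_compl HB)) _ => n; tauto.
Qed.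

Lemma uf_union3 A B C : p (fun n => A n \/ B n \/ C n) -> p A \/ p B \/ p C.
Proof.
move/uf_union => [H | /uf_union]; tauto.
Qed.

Lemma uf_unbounded A : p A -> forall m, exists n, m <= n /\ A n.
Proof. by case: Hp => _ H; apply: H. Qed.

Lemma uf_bounded A M : (forall n, A n -> n < M) -> ~ p A.
Proof.
move=> H /uf_unbounded /(_ M) [n [Hn /H]]; by rewrite ltnNge Hn.
Qed.

Lemma uf_tail m : p (fun n => m <= n).
Proof.
apply: NNPP => H; apply: (@uf_bounded (fun n => ~ m <= n) m _ (uf_compl H)) => n.
by rewrite ltnNge => /negP.
Qed.

End Ultra.

Lemma sel_fu p : selective p -> free_ultrafilter p.
Proof. by case. Qed.

Lemma SEL_h p (h : nat -> nat) : selective p -> (forall n, exists x, h x = n) ->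
  (exists n, p (fun x => h x = n)) \/
  (exists B, p B /\ forall x y, B x -> B y -> h x = h y -> x = y).
Proof.
move=> [Hfu Hs] Hsurj.
have Hpart : is_partition (fun n x => h x = n).
  split => //; last by move=> x; exists (h x).
  by move=> n m x Hnm Hn Hm; apply: Hnm; rewrite -Hn -Hm.
case: (Hs _ Hpart) => [H | [B [HB Hsel]]]; [left => // | right].
exists B; split => // x y Bx By Hxy.
case: (Hsel (h x)) => x0 [[_ _] Huniq].
by rewrite (Huniq x Bx erefl) (Huniq y By (esym Hxy)).
Qed.

Lemma SEL p (c : nat -> nat) : selective p ->
  (exists n, p (fun x => c x = n)) \/
  (exists B, p B /\ forall x y, B x -> B y -> c x = c y -> x = y).
Proof.
move=> Hsel; have Hfu := sel_fu Hsel.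
have [b Hb] : exists b, p (fun x => odd x = b).
  case: (Hfu) => [[_ _ _ H4] _]; case: (H4 (fun x => odd x = true)) => H.
    by exists true.
  exists false; apply: (uf_up Hfu H) => x; case: (odd x) => //.
pose h x := if odd x == b then c x else x./2.
have Hsurj : forall n, exists x, h x = n.
  move=> n; exists ((~~ b) + n.*2)%N; rewrite /h oddD odd_double addbF.
  by case: b {Hb h} => /=; rewrite ?add0n ?add1n /= ?doubleK ?uphalf_double ?half_bit_double.
case: (SEL_h Hsel Hsurj) => [[n Hn] | [B [HB Hinj]]].
  left; exists n; apply: (uf_up Hfu) (uf_cap Hfu Hn Hb) _ => x [].
  by rewrite /h => <- ->; rewrite eqxx.
right; exists (fun x => B x /\ odd x = b); split; first by apply: (uf_up Hfu (uf_cap Hfu HB Hb)).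
move=> x y [Bx Ox] [By Oy] Hc; apply: Hinj => //.
by rewrite /h Ox Oy eqxx.
Qed.

Lemma ppoint p (X : nat -> nat -> Prop) : selective p -> (forall n, p (X n)) ->
  exists Y, p Y /\ forall n, exists M, forall x, Y x -> ~ X n x -> x < M.
Proof.
move=> Hsel HX; have Hfu := sel_fu Hsel.
pose Z n x := (forall i, i <= n -> X i x) /\ n <= x.
have HZ : forall n, p (Z n).
  elim=> [|n IH].
    apply: (uf_up Hfu) (uf_cap Hfu (HX 0) (uf_tail Hfu 0)) _ => x [H0 _]; split => //.
    by move=> i; rewrite leqn0 => /eqP ->.
  apply: (uf_up Hfu) (uf_cap Hfu (uf_cap Hfu IH (HX n.+1)) (uf_tail Hfu n.+1)) _.
  move=> x [[[H1 _] H2] H3]; split => // i; rewrite leq_eqVlt => /orP [/eqP -> // | ].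
  by rewrite ltnS; apply: H1.
pose c x := least (fun n => ~ Z n x).
have Hc : forall x, ~ Z (c x) x /\ forall m, ~ Z m x -> c x <= m.
  move=> x; apply: leastP; exists x.+1; rewrite /Z => [[_]]; by rewrite ltnn.
case: (SEL c Hsel) => [[n Hn] | [B [HB Hinj]]].
  exfalso; apply: (uf_notboth Hfu (HZ n)); apply: (uf_up Hfu Hn) => x <-; exact: (Hc x).1.
exists B; split => // n.
pose sel i := chooseD 0 (fun x => B x /\ c x = i).
exists (mx (fun i => (sel i).+1) n.+1) => x Bx nX.
have Hcx : c x <= n.
  apply: (Hc x).2; move=> [H _]; apply: nX; exact: H.
have Hs : B (sel (c x)) /\ c (sel (c x)) = c x.
  exact: (chooseDP 0 (ex_intro (fun y => B y /\ c y = c x) x (conj Bx erefl))).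
have -> : x = sel (c x) by apply: Hinj; case: Hs.
by apply: (mx_ge (fun i => (sel i).+1)); rewrite ltnS.
Qed.

Lemma dec_case (P : Prop) : (dec P = true /\ P) \/ (dec P = false /\ ~ P).
Proof. by case: (@decP P) => H; [left | right]. Qed.

Lemma mem_symdiff (T : choiceType) (A B : {fset T}) x :
  (x \in symdiff A B) = (x \in A) (+) (x \in B).
Proof. by rewrite /symdiff !inE; case: (x \in A); case: (x \in B). Qed.

Lemma mem_ssum (J : Type) (T : choiceType) (s : seq J) (v : J -> {fset T}) x :
  (x \in \big[@symdiff T/fset0]_(i <- s) v i) = odd (count (fun i => x \in v i) s).
Proof.
elim: s => [|a s IH]; first by rewrite big_nil inE.
by rewrite big_cons mem_symdiff IH /= oddD; case: (x \in v a).
Qed.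

Definition ssum (J : Type) (T : choiceType) (s : seq J) (v : J -> {fset T}) :=
  \big[@symdiff T/fset0]_(i <- s) v i.

Definition getl (T : Type) (u : nat + T) : option nat := if u is inl j then Some j else None.
Definition getr (T : Type) (u : nat + T) : option T := if u is inr j then Some j else None.

Lemma count_sum (T : Type) (P : nat + T -> bool) s :
  count P s = (count (fun j => P (inl j)) (pmap (@getl T) s) + count (fun t => P (inr t)) (pmap (@getr T) s))%N.
Proof.
elim: s => //= a s ->; case: a => [j|t] /=; [by rewrite addnA | by rewrite addnCA].
Qed.

Section Indep.
Variables (T : choiceType) (k : nat) (g : nat -> nat -> {fset T}).
Hypothesis Hind : lin_indep (fun jm : nat * nat => jm.1 < k) (fun jm => g jm.2 jm.1).

Definition Pv (v : {fset T}) b :=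
  exists s, [/\ uniq s, s != [::], all (fun j => j < k) s & ssum s (g b) = v].

Lemma Pv_uniq v b b' : Pv v b -> Pv v b' -> b = b'.
Proof.
move=> [s [us ns as1 Es]] [s' [us' ns' as' Es']].
apply/eqP; apply/negP => /negP nbb.
pose t := [seq (j, b) | j <- s] ++ [seq (j, b') | j <- s'].
have ut : uniq t.
  rewrite cat_uniq !map_inj_uniq ?us ?us' /=; try by move=> x y [].
  rewrite andbT; apply/hasPn => z /mapP [j _ ->]; apply/negP => /mapP [j' _ [_ E]].
  by move: nbb; rewrite E eqxx.
have := Hind (S := seq_fset tt t).
have HD : forall jm, jm \in seq_fset tt t -> jm.1 < k.
  move=> jm; rewrite seq_fsetE mem_cat => /orP [] /mapP [j Hj ->] /=.
    by move/allP: as1; apply.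
  by move/allP: as'; apply.
move=> /(_ HD) H; move: H.
have -> : (seq_fset tt t != fset0) = true.
  rewrite /t; clear HD ut t; case: s ns {us as1 Es} => // a s _.
  apply/fset0Pn; exists (a, b); by rewrite seq_fsetE mem_cat inE eqxx.
move=> /(_ isT) /negP; apply; apply/eqP/fsetP => x.
rewrite /fsum mem_ssum inE.
rewrite (permP (seq_fset_perm tt t)) undup_id // count_cat !count_map oddD.
have E1 : odd (count (preim (fun j => (j, b)) (fun i => x \in g i.2 i.1)) s) = (x \in v).
  by rewrite -Es /ssum mem_ssum.
have E2 : odd (count (preim (fun j => (j, b')) (fun i => x \in g i.2 i.1)) s') = (x \in v).
  by rewrite -Es' /ssum mem_ssum.
by rewrite E1 E2 addbb.
Qed.

Definition theb (v : {fset T}) : nat := chooseD 0 (Pv v).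

Definition braw (W : {fset T}) : nat := smax (fun v => (theb v).+1) (fpowerset W).

Lemma braw_indep (W : {fset T}) b : braw W <= b ->
  lin_indep (fun u : nat + T => match u with inl j => j < k | inr mu => mu \in W end)
            (fun u => match u with inl j => g b j | inr mu => [fset mu] end).
Proof.
move=> Hb S HD Hne; apply/negP => /eqP H0.
have Hodd : forall x, odd (count (fun u => x \in (match u with inl j => g b j | inr mu => [fset mu] end)) S) = false.
  by move=> x; rewrite -mem_ssum; rewrite /fsum in H0; rewrite H0 inE.
pose s := pmap (@getl T) S; pose sR := pmap (@getr T) S.
have usR : uniq sR by apply: (@pmap_uniq _ _ _ inr) => //; [case | exact: fset_uniq].
have us : uniq s by apply: (@pmap_uniq _ _ _ inl) => //; [case | exact: fset_uniq].
have msR : forall mu, (mu \in sR) = (inr mu \in S).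
  by move=> mu; rewrite /sR (@can2_mem_pmap _ _ _ inr) //; case.
have ms : forall j, (j \in s) = (inl j \in S).
  by move=> j; rewrite /s (@can2_mem_pmap _ _ _ inl) //; case.
have Hc : forall x, odd (count (fun j => x \in g b j) s) = (x \in sR).
  move=> x; have := Hodd x; rewrite count_sum /= -/s -/sR oddD.
  have -> : count (fun t => x \in [fset t]) sR = count_mem x sR.
    by apply: eq_count => t /=; rewrite inE eq_sym.
  by rewrite count_uniq_mem //; case: (odd _); case: (x \in sR).
case Es: s => [|a s'].
  case/fset0Pn: Hne => [[j | mu] Hu].
    by move: (ms j); rewrite Hu Es.
  by move: (Hc mu); rewrite Es msR Hu.
pose v := ssum s (g b).
have Pvb : Pv v b.
  exists s; split => //; first by rewrite Es.
  by apply/allP => j; rewrite ms => /HD.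
have Hsub : v `<=` W.
  apply/fsubsetP => x; rewrite /v /ssum mem_ssum Hc msR => /HD //.
have : Pv v (theb v) by apply: chooseDP; exists b.
move/Pv_uniq => /(_ _ Pvb) Eb.
have := @smax_ge _ (fun v => (theb v).+1) (enum_fset (fpowerset W)) v.
rewrite fpowersetE Hsub => /(_ isT); rewrite Eb -/(braw W) => H.
by move: (leq_trans H Hb); rewrite ltnn.
Qed.
End Indep.

Section Main.
Variables (T : choiceType) (E I : T -> Prop) (F : {fset T})
  (k : T -> nat) (p : T -> (nat -> Prop) -> Prop)
  (g : T -> nat -> nat -> {fset T}) (d : T -> nat -> {fset T})
  (y : nat -> T).
Hypothesis HEc : countable_set E.
Hypothesis HIE : forall x, I x -> E x.
Hypothesis HIne : exists x, I x.
Hypothesis HFE : forall x, x \in F -> E x.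
Hypothesis Hsel : forall xi, I xi -> selective (p xi).
Hypothesis Hrk : forall xi eta, I xi -> I eta -> xi <> eta -> RK_incomparable (p xi) (p eta).
Hypothesis HgE : forall xi m j, I xi -> j < k xi -> forall x, x \in g xi m j -> E x.
Hypothesis Hgind : forall xi, I xi ->
     lin_indep (fun jm : nat * nat => jm.1 < k xi) (fun jm => g xi jm.2 jm.1).
Hypothesis HdE : forall xi j, I xi -> j < k xi -> forall x, x \in d xi j -> E x.
Hypothesis Hyinj : injective y.
Hypothesis HyE : forall n, E (y n).

Definition xi0 := chooseD (y 0) I.
Lemma Ixi0 : I xi0. Proof. exact: chooseDP. Qed.

Definition fE := chooseD (fun _ => y 0) (fun f : nat -> T => forall x, E x -> exists n, f n = x).
Lemma fEP x : E x -> exists n, fE n = x.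
Proof. by apply: (chooseDP (fun _ => y 0) HEc). Qed.

Definition e n := if dec (E (fE n)) then fE n else y 0.
Definition z n := if dec (exists t, y t = e n) then y 0 else e n.
Definition w i := if i %% 3 == 0 then z (i %/ 3)
                  else if i %% 3 == 1 then y (2 * (i %/ 3)) else y (2 * (i %/ 3)).+1.

Lemma eE n : E (e n).
Proof. by rewrite /e; case: (dec_case (E (fE n))) => [[-> H]|[-> H]]. Qed.

Lemma wE i : E (w i).
Proof. rewrite /w /z; case: ifP => _; last by case: ifP. case: (dec_case (exists t, y t = e (i %/ 3))) => [[-> _]|[-> _]] //; exact: eE. Qed.

Lemma w_y t : w (t./2 * 3 + (1 + odd t)) = y t.
Proof.
have Hm : (1 + odd t) < 3 by case: (odd t).
rewrite /w modnMDl modn_small // divnMDl // divn_small // addn0.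
case: (odd t) (odd_double_half t) => /= H; congr y; rewrite -H -?addnn ?add0n; lia.
Qed.

Lemma w_onto x : E x -> exists i, w i = x.
Proof.
move=> Ex; case: (fEP Ex) => n Hn.
have Hen : e n = x by rewrite /e; case: (dec_case (E (fE n))) => [[-> _] // | [_ H]]; exfalso; apply: H; rewrite Hn.
case: (dec_case (exists t, y t = e n)) => [[Hd [t Ht]] | [Hd Hno]].
  exists (t./2 * 3 + (1 + odd t))%N; by rewrite w_y Ht.
exists (n * 3); by rewrite /w modnMl eqxx mulnK // /z Hd.
Qed.

Definition W (M : nat) : {fset T} := seq_fset tt (map w (iota 0 (3 * M + 3))).

Lemma memW x M : x \in W M <-> exists i, i < 3 * M + 3 /\ w i = x.
Proof.
rewrite seq_fsetE; split.
  by case/mapP => i; rewrite mem_iota add0n => Hi ->; exists i.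
by case=> i [Hi <-]; apply: map_f; rewrite mem_iota add0n.
Qed.

Lemma WE x M : x \in W M -> E x.
Proof. by case/memW => i [_ <-]; exact: wE. Qed.

Lemma W_mono M M' : M <= M' -> W M `<=` W M'.
Proof.
move=> H; apply/fsubsetP => x /memW [i [Hi Hw]]; apply/memW; exists i; split => //; lia.
Qed.

Definition ix x := chooseD 0 (fun i => w i = x).
Lemma ixP x : E x -> w (ix x) = x.
Proof. by move/w_onto => H; apply: (chooseDP 0 H). Qed.

Lemma inW x M : E x -> ix x <= M -> x \in W M.
Proof. by move=> Ex H; apply/memW; exists (ix x); split; [lia | exact: ixP]. Qed.

Definition costf (A : {fset T}) := smax ix (enum_fset A).

Lemma sub_W A M : (forall x, x \in A -> E x) -> costf A <= M -> A `<=` W M.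
Proof.
move=> HA H; apply/fsubsetP => x Hx; apply: inW; first exact: HA.
apply: leq_trans H; exact: (@smax_ge _ ix (enum_fset A) x).
Qed.

Lemma yW n M : y n \in W M <-> n < 2 * M.+1.
Proof.
split.
  case/memW => i [Hi]; rewrite /w.
  have Hq : i %/ 3 <= M by rewrite -ltnS ltn_divLR //; lia.
  case: ifP => _.
    rewrite /z; case: (dec_case (exists t, y t = e (i %/ 3))) => [[-> _] | [-> Hno]].
      by move/Hyinj => <-.
    by move=> Hz; exfalso; apply: Hno; exists n.
  by case: ifP => _ /Hyinj <-; lia.
move=> Hn; apply/memW; exists (n./2 * 3 + (1 + odd n))%N; split; last exact: w_y.
have := odd_double_half n; case: (odd n) => /= H; lia.
Qed.

Definition cost_pt xi := maxn (ix xi) (mx (fun j => costf (d xi j)) (k xi)).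
Definition C0 := costf F.

Definition need M b := maxn M.+1
  (mx (fun i => if dec (I (w i)) then mx (fun j => costf (g (w i) b j)) (k (w i)) else 0) (3 * M + 3)).

Lemma need_mono M M' b : M <= M' -> need M b <= need M' b.
Proof.
move=> H; rewrite /need geq_max; apply/andP; split; rewrite leq_max; apply/orP.
  left; lia.
right; apply: mx_mono_n; lia.
Qed.

Lemma need_gt M b : M < need M b.
Proof. by rewrite /need leq_max leqnn. Qed.

Lemma need_g M b i j : i < 3 * M + 3 -> I (w i) -> j < k (w i) -> costf (g (w i) b j) <= need M b.
Proof.
move=> Hi HI Hj; rewrite /need leq_max; apply/orP; right.
apply: leq_trans (mx_ge _ Hi); case: (dec_case (I (w i))) => [[-> _]|[-> _]] //; exact: (mx_ge (fun j => costf (g (w i) b j))).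
Qed.

Fixpoint psi x := if x is x'.+1 then maxn (psi x') (need (maxn (maxn C0 x) (psi x')) x)
                  else need (maxn (maxn C0 0) 0) 0.

Definition Xof x := maxn (maxn C0 x) (if x is x'.+1 then psi x' else 0).

Lemma psi_need x : need (Xof x) x <= psi x.
Proof. case: x => [|x] //=; by rewrite leq_max leqnn orbT. Qed.

Lemma psi_mono x x' : x <= x' -> psi x <= psi x'.
Proof.
elim: x' => [|x' IH]; first by rewrite leqn0 => /eqP ->.
rewrite leq_eqVlt => /orP [/eqP -> // | ]; rewrite ltnS => /IH H.
by apply: leq_trans H _; rewrite /= leq_max leqnn.
Qed.

Lemma psi_gt x : Xof x < psi x.
Proof. exact: leq_trans (need_gt _ _) (psi_need x). Qed.

Definition beta xi K := mx (fun K' => braw (k xi) (g xi) (W K')) K.+1.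

Lemma beta_mono xi K K' : K <= K' -> beta xi K <= beta xi K'.
Proof. by move=> H; apply: mx_mono_n. Qed.

Lemma beta_max xi K K' : beta xi (maxn K K') <= maxn (beta xi K) (beta xi K').
Proof. by case: (leqP K K') => H; rewrite ?(maxn_idPr H) ?(maxn_idPl (ltnW H)) leq_max leqnn ?orbT. Qed.

Lemma beta_indep xi K b : I xi -> beta xi K <= b ->
  lin_indep (fun u : nat + T => match u with inl j => j < k xi | inr mu => mu \in W K end)
            (fun u => match u with inl j => g xi b j | inr mu => [fset mu] end).
Proof.
move=> HI Hb; apply: braw_indep; first exact: Hgind.
apply: leq_trans Hb; exact: (mx_ge (fun K' => braw (k xi) (g xi) (W K'))).
Qed.

Definition c n := if dec (I (fE n)) then fE n else xi0.
Lemma cI n : I (c n).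
Proof. rewrite /c; case: (dec_case (I (fE n))) => [[-> H]|[-> H]] //; exact: Ixi0. Qed.

Lemma c_onto xi : I xi -> exists n, c n = xi.
Proof.
move=> HI; case: (fEP (HIE HI)) => n Hn; exists n; rewrite /c.
by case: (dec_case (I (fE n))) => [[-> _] // | [_ H]]; exfalso; apply: H; rewrite Hn.
Qed.

Definition nx xi := chooseD 0 (fun n => c n = xi).
Lemma nxP xi : I xi -> c (nx xi) = xi.
Proof. by move/c_onto => H; apply: (chooseDP 0 H). Qed.

Definition G x := mx (fun i => beta (c i) (psi x)) x.+1.

Lemma G_mono x x' : x <= x' -> G x <= G x'.
Proof.
move=> H; apply: leq_trans (mx_mono_n _ (_ : x.+1 <= x'.+1)) _; first by [].
apply: mx_mono_f => i _; apply: beta_mono; exact: psi_mono.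
Qed.

Fixpoint a n := if n is n'.+1 then (a n' + G (a n')).+1 else 0.

Lemma a_lt n : a n < a n.+1.
Proof. by rewrite /= ltnS leq_addr. Qed.

Lemma a_mono n m : n <= m -> a n <= a m.
Proof.
elim: m => [|m IH]; first by rewrite leqn0 => /eqP ->.
rewrite leq_eqVlt => /orP [/eqP -> // | ]; rewrite ltnS => /IH H.
exact: leq_trans H (ltnW (a_lt m)).
Qed.

Fixpoint pi x := if x is x'.+1 then (if a (pi x').+1 <= x then (pi x').+1 else pi x') else 0.

Lemma pi_spec x : a (pi x) <= x < a (pi x).+1.
Proof.
elim: x => [|x /andP [H1 H2]] /=; first by [].
case: ifP => H.
  by rewrite H /=; apply: leq_ltn_trans H2 (a_lt _).
apply/andP; split; [exact: leq_trans H1 (leqnSn _) | by rewrite ltnNge H].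
Qed.

Lemma pi_mono x x' : x <= x' -> pi x <= pi x'.
Proof.
move=> H; rewrite leqNgt; apply/negP => Hlt.
have := pi_spec x; have := pi_spec x'; move=> /andP [_ H2] /andP [H3 _].
have := a_mono Hlt; lia.
Qed.

Lemma pi_bound x n : pi x <= n -> x < a n.+1.
Proof. by move=> H; case/andP: (pi_spec x) => _ H2; apply: leq_trans H2 (a_mono _). Qed.

Lemma pi_sparse x x' : (pi x).+2 <= pi x' -> G x < x'.
Proof.
move=> H; case/andP: (pi_spec x') => H1 _.
apply: leq_trans H1; apply: leq_trans (a_mono H).
rewrite /= ltnS; apply: leq_trans (leq_addl _ _); apply: G_mono.
by case/andP: (pi_spec x) => _ /ltnW.
Qed.

Definition adj x x' := pi x' <= (pi x).+1 /\ pi x <= (pi x').+1.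
Definition NB (V : nat -> Prop) x' := exists x, V x /\ adj x x'.

Lemma adj_sym x x' : adj x x' -> adj x' x.
Proof. by case. Qed.

Lemma adj_refl x : adj x x.
Proof. by split; rewrite leqnSn. Qed.

Definition PY xi (Y : nat -> Prop) := [/\ p xi Y,
  (forall x x', Y x -> Y x' -> pi x = pi x' -> x = x') &
  (forall x x', Y x -> Y x' -> odd (pi x) = odd (pi x'))].

Lemma Y_ex xi : exists Y, I xi -> PY xi Y.
Proof.
case: (classic (I xi)) => HI; last by exists (fun _ => True).
have Hs := Hsel HI; have Hfu := sel_fu Hs.
case: (SEL pi Hs) => [[n Hn] | [B [HB Hinj]]].
  exfalso; apply: (@uf_bounded _ Hfu (fun x => pi x = n) (a n.+1)) Hn => x Hx.
  by apply: pi_bound; rewrite Hx.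
have [bb Hbb] : exists bb, p xi (fun x => odd (pi x) = bb).
  case: (Hfu) => [[_ _ _ H4] _]; case: (H4 (fun x => odd (pi x) = true)) => H.
    by exists true.
  exists false; apply: (uf_up Hfu H) => x; case: (odd (pi x)) => //.
exists (fun x => B x /\ odd (pi x) = bb) => _; split.
- exact: (uf_cap Hfu HB Hbb).
- by move=> x x' [Bx _] [Bx' _]; apply: Hinj.
- by move=> x x' [_ ->] [_ ->].
Qed.

Definition Yf xi := chooseD (fun _ => False) (fun Y => I xi -> PY xi Y).
Lemma YfP xi : I xi -> PY xi (Yf xi).
Proof. by apply: (chooseDP (fun _ => False) (Y_ex xi)). Qed.

Lemma nonRK (q1 q2 : (nat -> Prop) -> Prop) (sig : nat -> nat) :
  free_ultrafilter q1 -> free_ultrafilter q2 -> ~ RK_le q1 q2 ->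
  exists W', q1 W' /\ ~ q2 (fun n => W' (sig n)).
Proof.
move=> H1 H2 nRK; apply: NNPP => H; apply: nRK; exists sig => A; split.
  move=> HA; apply: NNPP => HB; apply: H; by exists A.
move=> HB; apply: NNPP => HA; apply: H; exists (fun n => ~ A n); split.
  exact: uf_compl.
by move=> HC; apply: (uf_notboth H2 HB HC).
Qed.

Lemma sep_ex xi eta : exists W0, I xi -> I eta -> xi <> eta -> p xi W0 /\ ~ p eta (NB W0).
Proof.
case: (classic (I xi /\ I eta /\ xi <> eta)) => [[HI [HI' Hne]] | Hno]; last first.
  by exists (fun _ => True) => HI HI' Hne; exfalso; apply: Hno.
have Hfu := sel_fu (Hsel HI); have Hfu' := sel_fu (Hsel HI').
have nRK : ~ RK_le (p xi) (p eta) by case: (Hrk HI HI' Hne).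
case: (YfP HI) => pY Yinj Ypar.
pose Y := Yf xi.
pose s0 x' := chooseD 0 (fun x => Y x /\ pi x = pi x').
pose s1 x' := chooseD 0 (fun x => Y x /\ pi x = (pi x').+1).
pose s2 x' := chooseD 0 (fun x => Y x /\ (pi x).+1 = pi x').
case: (nonRK s0 Hfu Hfu' nRK) => W0 [pW0 nW0].
case: (nonRK s1 Hfu Hfu' nRK) => W1 [pW1 nW1].
case: (nonRK s2 Hfu Hfu' nRK) => W2 [pW2 nW2].
exists (fun x => Y x /\ W0 x /\ W1 x /\ W2 x) => _ _ _; split.
  apply: (uf_cap Hfu pY); apply: (uf_cap Hfu pW0); exact: (uf_cap Hfu pW1 pW2).
move=> H.
have : p eta (fun x' => W0 (s0 x') \/ W1 (s1 x') \/ W2 (s2 x')).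
  apply: (uf_up Hfu' H) => x' [x [[Yx [W0x [W1x W2x]]] [h1 h2]]].
  have : pi x = pi x' \/ pi x = (pi x').+1 \/ (pi x).+1 = pi x' by lia.
  case=> [E0 | [E1 | E2]].
  - left; have Hs : Y (s0 x') /\ pi (s0 x') = pi x'.
      exact: (chooseDP 0 (ex_intro (fun z => Y z /\ pi z = pi x') x (conj Yx E0))).
    suff -> : s0 x' = x by [].
    by apply: Yinj; [case: Hs | exact: Yx | rewrite E0; case: Hs].
  - right; left; have Hs : Y (s1 x') /\ pi (s1 x') = (pi x').+1.
      exact: (chooseDP 0 (ex_intro (fun z => Y z /\ pi z = (pi x').+1) x (conj Yx E1))).
    suff -> : s1 x' = x by [].
    by apply: Yinj; [case: Hs | exact: Yx | rewrite E1; case: Hs].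
  - right; right; have Hs : Y (s2 x') /\ (pi (s2 x')).+1 = pi x'.
      exact: (chooseDP 0 (ex_intro (fun z => Y z /\ (pi z).+1 = pi x') x (conj Yx E2))).
    suff -> : s2 x' = x by [].
    apply: Yinj; [case: Hs | exact: Yx | ] => //.
    by case: Hs => _; rewrite -E2 => [[]].
by case/(uf_union3 Hfu') => [//|[//|//]].
Qed.

Definition Wf xi eta := chooseD (fun _ => True)
  (fun W0 => I xi -> I eta -> xi <> eta -> p xi W0 /\ ~ p eta (NB W0)).
Lemma WfP xi eta : I xi -> I eta -> xi <> eta -> p xi (Wf xi eta) /\ ~ p eta (NB (Wf xi eta)).
Proof. by apply: (chooseDP (fun _ => True) (sep_ex xi eta)). Qed.

Definition PZ xi (Z : nat -> Prop) := [/\ p xi Z, (forall x, Z x -> Yf xi x) &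
  forall eta, I eta -> eta <> xi -> ~ p eta (NB Z)].

Lemma Z_ex xi : exists Z, I xi -> PZ xi Z.
Proof.
case: (classic (I xi)) => HI; last by exists (fun _ => True).
have Hs := Hsel HI; have Hfu := sel_fu Hs.
pose X n x := c n = xi \/ Wf xi (c n) x.
have HX : forall n, p xi (X n).
  move=> n; case: (classic (c n = xi)) => Hc.
    by apply: (uf_up Hfu (uf_tail Hfu 0)) => x _; left.
  have [H _] := WfP HI (cI n) (nesym Hc).
  by apply: (uf_up Hfu H) => x Hx; right.
case: (ppoint Hs HX) => Y' [pY' Hb].
case: (YfP HI) => pY _ _.
exists (fun x => Y' x /\ Yf xi x) => _; split.
- exact: (uf_cap Hfu pY' pY).
- by move=> x [].
move=> eta HI' Hne H.
have Hfu' := sel_fu (Hsel HI').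
case: (c_onto HI') => n Hn.
case: (Hb n) => M HM.
have : p eta (fun x' => NB (Wf xi eta) x' \/ x' < a (pi M).+2).
  apply: (uf_up Hfu' H) => x' [x [[Y'x _] [h1 h2]]].
  case: (classic (X n x)) => [[Hc | HW] | nX].
  - by exfalso; apply: Hne; rewrite -Hn.
  - by left; exists x; split => //; rewrite -Hn.
  - right; apply: pi_bound; have := pi_mono (ltnW (HM x Y'x nX)); lia.
case/(uf_union Hfu') => [HN | HB].
  by have [_ H2] := WfP HI HI' (nesym Hne); apply: H2.
by apply: (@uf_bounded _ Hfu' _ (a (pi M).+2)) HB.
Qed.

Definition Zf xi := chooseD (fun _ => False) (fun Z => I xi -> PZ xi Z).
Lemma ZfP xi : I xi -> PZ xi (Zf xi).
Proof. by apply: (chooseDP (fun _ => False) (Z_ex xi)). Qed.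

Definition Tt xi := maxn (maxn (cost_pt xi) (beta xi C0))
                         (maxn (beta xi (cost_pt xi)) (beta xi (psi (nx xi)))).

Definition V xi x := [/\ Zf xi x, Tt xi <= x &
  forall i, i < nx xi -> c i <> xi -> ~ NB (Zf (c i)) x].

Lemma pV xi : I xi -> p xi (V xi).
Proof.
move=> HI; have Hfu := sel_fu (Hsel HI).
have Hfin : forall n, p xi (fun x => forall i, i < n -> c i <> xi -> ~ NB (Zf (c i)) x).
  elim=> [|n IH]; first by apply: (uf_up Hfu (uf_tail Hfu 0)).
  have Hn : p xi (fun x => c n <> xi -> ~ NB (Zf (c n)) x).
    case: (classic (c n = xi)) => Hc.
      by apply: (uf_up Hfu (uf_tail Hfu 0)).
    case: (ZfP (cI n)) => _ _ H; have := uf_compl Hfu (H xi HI (nesym Hc)).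
    by move=> H'; apply: (uf_up Hfu H') => x Hx _.
  apply: (uf_up Hfu (uf_cap Hfu IH Hn)) => x [H1 H2] i; rewrite ltnS leq_eqVlt.
  by case/orP => [/eqP -> // | /H1].
case: (ZfP HI) => pZ _ _.
apply: (uf_up Hfu (uf_cap Hfu pZ (uf_cap Hfu (uf_tail Hfu (Tt xi)) (Hfin (nx xi))))).
by move=> x [H1 [H2 H3]]; split.
Qed.

Lemma V_nonadj xi eta x x' : I xi -> I eta -> xi <> eta -> V xi x -> V eta x' -> ~ adj x x'.
Proof.
move=> HI HI' Hne [Zx _ Hx] [Zx' _ Hx'] Ha.
case: (ltngtP (nx xi) (nx eta)) => H.
- apply: (Hx' _ H); first by rewrite nxP.
  by rewrite nxP //; exists x.
- apply: (Hx _ H); first by rewrite nxP //; apply: nesym.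
  by rewrite nxP //; exists x'; split => //; apply: adj_sym.
- by apply: Hne; rewrite -(nxP HI) -(nxP HI') H.
Qed.

Definition S x := exists xi, I xi /\ V xi x.

Lemma V_uniq xi eta x : I xi -> I eta -> V xi x -> V eta x -> xi = eta.
Proof.
move=> HI HI' H1 H2; apply: NNPP => Hne.
exact: (V_nonadj HI HI' Hne H1 H2 (adj_refl x)).
Qed.

Lemma S_sparse x x' : S x -> S x' -> x < x' -> (pi x).+2 <= pi x'.
Proof.
move=> [xi [HI Vx]] [eta [HI' Vx']] Hlt.
have Hm := pi_mono (ltnW Hlt).
case: (classic (xi = eta)) => [Heq | Hne]; last first.
  have := V_nonadj HI HI' Hne Vx Vx'; rewrite /adj; lia.
subst eta; case: (YfP HI) => _ Yinj Ypar.
case: (ZfP HI) => _ ZY _.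
case: Vx => [/ZY Yx _ _]; case: Vx' => [/ZY Yx' _ _].
have Hne : pi x <> pi x'.
  by move=> /(Yinj _ _ Yx Yx') Ee; move: Hlt; rewrite Ee ltnn.
have Hne1 : pi x' <> (pi x).+1.
  by move=> Ee; have := Ypar _ _ Yx Yx'; rewrite Ee /= => /eqP; case: (odd (pi x)).
lia.
Qed.

Lemma S_inf m : exists x, S x /\ m < x.
Proof.
have Hfu := sel_fu (Hsel Ixi0).
case: (uf_unbounded Hfu (pV Ixi0) m.+1) => x [Hx Vx].
by exists x; split => //; exists xi0; split => //; exact: Ixi0.
Qed.

Fixpoint bs m := if m is m'.+1 then least (fun x => S x /\ bs m' < x) else least S.

Lemma bs_spec m : S (bs m.+1) /\ bs m < bs m.+1 /\ forall x, S x -> bs m < x -> bs m.+1 <= x.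
Proof.
have [[H1 H2] H3] := leastP (S_inf (bs m)).
by split => //; split => // x Sx Hx; apply: H3.
Qed.

Lemma bsS m : S (bs m).
Proof.
case: m => [|m]; last by case: (bs_spec m).
have [x [Sx _]] := S_inf 0.
by case: (leastP (ex_intro _ x Sx)).
Qed.

Lemma bs_lt m : bs m < bs m.+1.
Proof. by case: (bs_spec m) => _ []. Qed.

Lemma bs_ge m : m <= bs m.
Proof. elim: m => // m IH; exact: leq_ltn_trans IH (bs_lt m). Qed.

Lemma bs_mono m m' : m < m' -> bs m < bs m'.
Proof.
elim: m' => // m' IH; rewrite ltnS leq_eqVlt => /orP [/eqP -> | /IH H]; first exact: bs_lt.
exact: ltn_trans H (bs_lt m').
Qed.

Lemma bs_onto x : S x -> exists m, bs m = x.
Proof.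
move=> Sx.
suff H : forall m, x < bs m -> exists i, bs i = x.
  by apply: (H x.+1); apply: leq_trans (bs_ge x.+1).
elim=> [|m IH] Hx.
  have [x1 [Sx1 _]] := S_inf 0.
  have [_ Hmin] := leastP (ex_intro _ x1 Sx1).
  by move: (Hmin x Sx); rewrite leqNgt Hx.
case: (ltngtP x (bs m)) => H.
- exact: IH.
- case: (bs_spec m) => _ [_ H3]; move: (H3 x Sx H); by rewrite leqNgt Hx.
- by exists m.
Qed.

Definition rho x := chooseD xi0 (fun xi => I xi /\ V xi x).
Lemma rhoP x : S x -> I (rho x) /\ V (rho x) x.
Proof. by move=> H; apply: (chooseDP xi0 H). Qed.

Definition r m := rho (bs m).
Lemma rI m : I (r m). Proof. exact: (rhoP (bsS m)).1. Qed.
Lemma rV m : V (r m) (bs m). Proof. exact: (rhoP (bsS m)).2. Qed.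

Definition M m := maxn (maxn C0 (cost_pt (r m))) (if m is m'.+1 then psi (bs m') else 0).

Lemma K1 m : cost_pt (r m) <= bs m.
Proof.
case: (rV m) => _ HT _; apply: leq_trans HT.
rewrite /Tt; lia.
Qed.

Lemma K2 m : M m <= Xof (bs m).
Proof.
have HK1 := K1 m.
case: m HK1 => [|m] HK1.
  rewrite /M /Xof; case: (bs 0) HK1 => [|x] /= HK1; lia.
have Hlt := bs_lt m.
case Eb: (bs m.+1) Hlt HK1 => [|x] //; rewrite ltnS => Hle HK1.
have := psi_mono Hle; rewrite /M /Xof; lia.
Qed.

Lemma K3 m : need (M m) (bs m) <= M m.+1.
Proof.
apply: leq_trans (need_mono (bs m) (K2 m)) _.
apply: leq_trans (psi_need (bs m)) _.
rewrite /M; lia.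
Qed.

Lemma M_lt m : M m < M m.+1.
Proof. exact: leq_trans (need_gt _ _) (K3 m). Qed.

Lemma Kbeta m : beta (r m) (M m) <= bs m.
Proof.
have [_ HT _] := rV m.
have HT1 : beta (r m) C0 <= bs m by apply: leq_trans HT; rewrite /Tt; lia.
have HT2 : beta (r m) (cost_pt (r m)) <= bs m by apply: leq_trans HT; rewrite /Tt; lia.
rewrite /M; apply: leq_trans (beta_max _ _ _) _; rewrite geq_max; apply/andP; split.
  by apply: leq_trans (beta_max _ _ _) _; rewrite geq_max HT1 HT2.
case: m HT HT1 HT2 => [|m] HT HT1 HT2.
  by apply: leq_trans HT1; apply: beta_mono.
case: (leqP (nx (r m.+1)) (bs m)) => Hn.
  apply: leq_trans (_ : G (bs m) <= bs m.+1).
    have := mx_ge (fun i => beta (c i) (psi (bs m))) (_ : nx (r m.+1) < (bs m).+1).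
    by rewrite nxP ?ltnS //; [move=> H; apply: H | exact: rI].
  apply: ltnW; apply: pi_sparse; apply: S_sparse; [exact: bsS | exact: bsS | exact: bs_lt].
apply: leq_trans HT; apply: leq_trans (_ : beta (r m.+1) (psi (nx (r m.+1))) <= _).
  by apply: beta_mono; apply: psi_mono; apply: ltnW.
rewrite /Tt; lia.
Qed.

Lemma main_constr :
  exists (b : nat -> nat) (r : nat -> T) (Es : nat -> {fset T}),
    (forall i, b i < b i.+1) /\
    ((forall m, I (r m)) /\ (forall xi, I xi -> exists m, r m = xi)) /\
    (forall i x, x \in Es i -> E x) /\
    (F `<=` Es 0 /\
        (forall x, E x <-> exists i, x \in Es i) /\
        (forall m, r m \in Es m) /\
        (forall m j, j < k (r m) -> d (r m) j `<=` Es m) /\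
        (forall m, Es m `<=` Es m.+1 /\
                     forall xi j, xi \in Es m -> I xi -> j < k xi ->
                       g xi (b m) j `<=` Es m.+1) /\
        (forall m,
                     lin_indep
                       (fun u : nat + T => match u with
                                           | inl j => j < k (r m)
                                           | inr mu => mu \in Es m end)
                       (fun u => match u with
                                 | inl j => g (r m) (b m) j
                                 | inr mu => [fset mu] end)) /\
        (forall xi, I xi -> p xi (fun n => exists i, r i = xi /\ b i = n)) /\
        (exists N : nat -> nat, (forall i, N i < N i.+1) /\
                     forall i n, y n \in Es i <-> n < 2 * N i)).
Proof.
have Hg : forall xi, I xi -> p xi (fun n => exists i, r i = xi /\ bs i = n).
  move=> xi HI; apply: (uf_up (sel_fu (Hsel HI)) (pV HI)) => x Vx.
  have Sx : S x by exists xi.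
  case: (bs_onto Sx) => i Hi; exists i; split => //.
  rewrite /r Hi; have [HI' Vx'] := rhoP Sx; exact: V_uniq HI' HI Vx' Vx.
exists bs, r, (fun m => W (M m)).
split; first exact: bs_lt.
split.
  split; first exact: rI.
  move=> xi HI; case: (uf_nonempty (sel_fu (Hsel HI)) (Hg xi HI)) => n [i [Hi _]].
  by exists i.
split; first by move=> i x; apply: WE.
split.
  apply: sub_W => //; rewrite /M /C0; lia.
split.
  move=> x; split; last by case=> i; apply: WE.
  move=> Ex; case: (w_onto Ex) => i Hi; exists i.+1; apply/memW; exists i; split => //.
  have := psi_gt (bs i); have := bs_ge i; rewrite /M /Xof; move: (psi (bs i)) => P.
  move=> H1 H2; suff : i <= maxn (maxn C0 (cost_pt (r i.+1))) P by lia.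
  lia.
split.
  move=> m; apply: inW; first exact: HIE (rI m).
  apply: leq_trans (_ : cost_pt (r m) <= _); first by rewrite /cost_pt; lia.
  rewrite /M; lia.
split.
  move=> m j Hj; apply: sub_W; first exact: HdE (rI m) Hj.
  apply: leq_trans (_ : cost_pt (r m) <= _).
    rewrite /cost_pt leq_max; apply/orP; right.
    exact: (mx_ge (fun j => costf (d (r m) j))).
  rewrite /M; lia.
split.
  move=> m; split; first by apply: W_mono; apply: ltnW; apply: M_lt.
  move=> xi j /memW [i [Hi Hw]] HI Hj; apply: sub_W; first exact: HgE HI Hj.
  apply: leq_trans (K3 m); rewrite -Hw; apply: need_g => //; by rewrite Hw.
split.
  by move=> m; apply: beta_indep; [exact: rI | exact: Kbeta].
split; first exact: Hg.
exists (fun i => (M i).+1); split; first by move=> i; rewrite ltnS; apply: M_lt.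
by move=> i n; apply: yW.
Qed.

End Main.

Theorem mainTheorem5 (T : choiceType) (E I : T -> Prop) (F : {fset T})
  (k : T -> nat) (p : T -> (nat -> Prop) -> Prop)
  (g : T -> nat -> nat -> {fset T}) (d : T -> nat -> {fset T})
  (y : nat -> T) :
  countable_set E ->
  (forall x, I x -> E x) -> (exists x, I x) ->
  (forall x, x \in F -> E x) ->
  (forall xi, I xi -> selective (p xi)) ->
  (forall xi eta, I xi -> I eta -> xi <> eta -> RK_incomparable (p xi) (p eta)) ->
  (forall xi m j, I xi -> j < k xi -> forall x, x \in g xi m j -> E x) ->
  (forall xi, I xi ->
     lin_indep (fun jm : nat * nat => jm.1 < k xi) (fun jm => g xi jm.2 jm.1)) ->
  (forall xi j, I xi -> j < k xi -> forall x, x \in d xi j -> E x) ->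
  injective y -> (forall n, E (y n)) ->
  exists (b : nat -> nat) (r : nat -> T) (Es : nat -> {fset T}),
    (forall i, b i < b i.+1) /\
    ((forall m, I (r m)) /\ (forall xi, I xi -> exists m, r m = xi)) /\
    (forall i x, x \in Es i -> E x) /\
    ((* (a) *) F `<=` Es 0 /\
        (* (b) *) (forall x, E x <-> exists i, x \in Es i) /\
        (* (c) *) (forall m, r m \in Es m) /\
        (* (d) *) (forall m j, j < k (r m) -> d (r m) j `<=` Es m) /\
        (* (e) *) (forall m, Es m `<=` Es m.+1 /\
                     forall xi j, xi \in Es m -> I xi -> j < k xi ->
                       g xi (b m) j `<=` Es m.+1) /\
        (* (f) *) (forall m,
                     lin_indep
                       (fun u : nat + T => match u with
                                           | inl j => j < k (r m)
                                           | inr mu => mu \in Es m end)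
                       (fun u => match u with
                                 | inl j => g (r m) (b m) j
                                 | inr mu => [fset mu] end)) /\
        (* (g) *) (forall xi, I xi -> p xi (fun n => exists i, r i = xi /\ b i = n)) /\
        (* (h) *) (exists N : nat -> nat, (forall i, N i < N i.+1) /\
                     forall i n, y n \in Es i <-> n < 2 * N i)).
Proof.
move=> HEc HIE HIne HFE Hsel Hrk HgE Hgind HdE Hyinj HyE.
exact: (main_constr HEc HIE HIne HFE Hsel Hrk HgE Hgind HdE Hyinj HyE).
Qed.
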